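(* Let $\alpha\ge0$ and $k\ge1$, and let $\mathbf{v}$ be a unit vector with exactly $k$ nonzero entries whose sorted absolute values satisfy $v_{(i)}^2=\lambda i^{-\alpha}$ for $i=1,\dots,k$, where $\lambda=\big(\sum_{i=1}^k i^{-\alpha}\big)^{-1}$. Then, with constants depending only on $\alpha$ (not on $k$), $$ \max_{1\le p\le k} p\,s^2(p)\ \asymp\ \begin{cases} k^{2-2\alpha}, & 0\le\alpha<\tfrac12,\\ k, & \alpha\ge\tfrac12.\end{cases} $$
   Context: For a unit vector $\mathbf{v}$ with at most $k$ nonzero entries, $v_{(1)}\ge v_{(2)}\ge\cdots$ are the absolute values of its entries in decreasing order and $s(p)=\big(\sum_{i=1}^p v_{(i)}^2\big)^{-1}$ for $1\le p\le k$. For positive quantities $a_k,b_k$, $a_k\asymp b_k$ means there are constants $0<c\le C$ with $c\,b_k\le a_k\le C\,b_k$ for all (sufficiently large) $k$. *)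

(* Defs.v *)
From HB Require Import structures.
From mathcomp Require Import all_boot all_order all_algebra.
From mathcomp Require Import all_classical all_reals all_analysis.
Set Implicit Arguments. Unset Strict Implicit. Unset Printing Implicit Defensive.
Import Order.TTheory GRing.Theory Num.Theory.
Local Open Scope ring_scope.

Section Defs.
Variable R : realType.

Definition sorted_abs (n : nat) (v : 'rV[R]_n) : seq R :=
  sort (fun x y : R => y <= x) [seq `|v ord0 j| | j <- enum 'I_n].

(* v_(i), 1-indexed *)
Definition vord (n : nat) (v : 'rV[R]_n) (i : nat) : R := nth 0 (sorted_abs v) i.-1.

Definition sfun (n : nat) (v : 'rV[R]_n) (p : nat) : R :=
  (\sum_(1 <= i < p.+1) vord v i ^+ 2)^-1.

Definition nnz (n : nat) (v : 'rV[R]_n) : nat := #|[set j : 'I_n | v ord0 j != 0]|.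

Definition unit_vec (n : nat) (v : 'rV[R]_n) : Prop := \sum_(j < n) v ord0 j ^+ 2 = 1.

Definition lam (alpha : R) (k : nat) : R :=
  (\sum_(1 <= i < k.+1) (i%:R `^ (- alpha)))^-1.

Definition max_ps2 (n : nat) (v : 'rV[R]_n) (k : nat) : R :=
  \big[Num.max/0]_(1 <= p < k.+1) (p%:R * sfun v p ^+ 2).

Definition rate (alpha : R) (k : nat) : R :=
  if alpha < 2^-1 then k%:R `^ (2 - 2 * alpha) else k%:R.
End Defs.

(* Main.v *)
Require Import Defs.
From HB Require Import structures.
From mathcomp Require Import all_boot all_order all_algebra.
From mathcomp Require Import all_classical all_reals all_analysis.
From mathcomp Require Import ring lra.
Import Order.TTheory GRing.Theory Num.Theory.
Local Open Scope ring_scope.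

Section Aux.
Variable R : realType.

Lemma sum_isqrt (k : nat) :
  \sum_(1 <= i < k.+1) (Num.sqrt (i%:R : R))^-1 <= 2 * Num.sqrt (k%:R : R).
Proof.
elim: k => [|k IH]; first by rewrite big_geq // sqrtr0 mulr0.
rewrite big_nat_recr //=; move: IH.
set s := Num.sqrt (k%:R : R); set u := Num.sqrt (k.+1%:R : R).
have s0 : 0 <= s by apply: sqrtr_ge0.
have u0 : 0 < u by rewrite sqrtr_gt0 ltr0n.
have su : u ^+ 2 = s ^+ 2 + 1.
  by rewrite /u /s !sqr_sqrtr ?ler0n // -natr1.
have h : u^-1 <= 2 * u - 2 * s.
  rewrite -[u^-1]mul1r ler_pdivrMr //. have := sqr_ge0 (u - s). rewrite !expr2 in su *. nra.
move=> IH; lra.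
Qed.

Variable a : R.
Hypothesis ha : 0 <= a.

Definition Ssum (p : nat) : R := \sum_(1 <= i < p.+1) (i%:R `^ (- a)).
Definition t (i : nat) : R := i%:R `^ (2^-1 - a).

Lemma t_gt0 i : (0 < i)%N -> 0 < t i.
Proof. by move=> hi; rewrite powR_gt0 // ltr0n. Qed.

Lemma split_pow i : (0 < i)%N -> (i%:R : R) `^ (- a) = t i / Num.sqrt i%:R.
Proof.
move=> hi.
have -> : - a = (2^-1 - a) + (- 2^-1) by ring.
rewrite powRD; last by rewrite pnatr_eq0 -lt0n hi implybT.
by rewrite /t powRN powR12_sqrt ?ler0n.
Qed.

Lemma pow_anti i j : (0 < i)%N -> (i <= j)%N -> (j%:R : R) `^ (- a) <= i%:R `^ (- a).
Proof.
move=> hi hij.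
rewrite !powRN lef_pV2 ?posrE ?powR_gt0 ?ltr0n //; last exact: leq_trans hij.
by apply: ge0_ler_powR => //; rewrite ?nnegrE ?ler0n ?ler_nat.
Qed.

Lemma S_gt0 p : (0 < p)%N -> 0 < Ssum p.
Proof.
move=> hp; rewrite /Ssum (@big_cat_nat _ _ _ 2) //= big_nat1 powR1.
have : 0 <= \sum_(2 <= i < p.+1) (i%:R : R) `^ (- a).
  by apply: sumr_ge0 => i _; apply: powR_ge0.
lra.
Qed.

Lemma S_low p : (0 < p)%N -> Num.sqrt (p%:R : R) * t p <= Ssum p.
Proof.
move=> hp.
have -> : Num.sqrt (p%:R : R) * t p = \sum_(1 <= i < p.+1) (p%:R : R) `^ (- a).
  rewrite sumr_const_nat subn1 /= split_pow // -[t p / _ *+ p]mulr_natr.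
  have hq : 0 < Num.sqrt (p%:R : R) by rewrite sqrtr_gt0 ltr0n.
  have hpq : (p%:R : R) = Num.sqrt (p%:R : R) * Num.sqrt (p%:R : R).
    by rewrite -expr2 sqr_sqrtr ?ler0n.
  set q := Num.sqrt (p%:R : R) in hq hpq *.
  rewrite hpq; field; lra.
apply: ler_sum_nat => i /andP [h1 h2]; apply: pow_anti => //.
Qed.


Lemma t_mono (ha2 : a <= 2^-1) i j : (0 < i)%N -> (i <= j)%N -> t i <= t j.
Proof.
move=> hi hij; apply: ge0_ler_powR; rewrite ?nnegrE ?ler0n ?ler_nat //; lra.
Qed.

Lemma t_anti (ha2 : 2^-1 <= a) i j : (0 < i)%N -> (i <= j)%N -> t j <= t i.
Proof.
move=> hi hij; rewrite /t.
have -> : 2^-1 - a = - (a - 2^-1) by ring.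
rewrite !powRN lef_pV2 ?posrE ?powR_gt0 ?ltr0n //; last exact: leq_trans hij.
apply: ge0_ler_powR; rewrite ?nnegrE ?ler0n ?ler_nat //; lra.
Qed.

Lemma t_ge1 (ha2 : a <= 2^-1) i : (0 < i)%N -> 1 <= t i.
Proof.
move=> hi; have := @t_mono ha2 1 i (leqnn 1) hi.
by rewrite /t powR1.
Qed.

Lemma S_up_small (ha2 : a <= 2^-1) k : Ssum k <= 2 * t k * Num.sqrt (k%:R : R).
Proof.
apply: (@le_trans _ _ (t k * \sum_(1 <= i < k.+1) (Num.sqrt (i%:R : R))^-1)).
  rewrite mulr_sumr; apply: ler_sum_nat => i /andP [h1 h2].
  rewrite split_pow // ler_wpM2r ?invr_ge0 ?sqrtr_ge0 //.
  by apply: t_mono.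
have := sum_isqrt k; have := @t_gt0 k.
case: k => [|k] ht hs.
  by rewrite big_geq // mulr0 /t sqrtr0 mulr0.
have := ht isT; move=> {}ht.
apply: le_trans (ler_wpM2l (ltW ht) hs) _; by rewrite mulrCA mulrA.
Qed.

Lemma S_up_large (ha2 : 2^-1 <= a) p k : (0 < p)%N -> (p <= k)%N ->
  Ssum k <= Ssum p + 2 * t p * Num.sqrt (k%:R : R).
Proof.
move=> hp hpk.
rewrite /Ssum (@big_cat_nat _ _ _ p.+1) //= lerD2l.
apply: (@le_trans _ _ (t p * \sum_(p.+1 <= i < k.+1) (Num.sqrt (i%:R : R))^-1)).
  rewrite mulr_sumr; apply: ler_sum_nat => i /andP [h1 h2].
  rewrite split_pow; last exact: leq_trans h1.
  rewrite ler_wpM2r ?invr_ge0 ?sqrtr_ge0 //.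
  by apply: t_anti => //; apply: ltnW.
have H : \sum_(p.+1 <= i < k.+1) (Num.sqrt (i%:R : R))^-1 <= 2 * Num.sqrt (k%:R : R).
  apply: le_trans (sum_isqrt k).
  rewrite (@big_cat_nat _ _ _ p.+1 1 k.+1) //= lerDr.
  by apply: sumr_ge0 => i _; rewrite invr_ge0 sqrtr_ge0.
apply: le_trans (ler_wpM2l (ltW (@t_gt0 p hp)) H) _.
by rewrite mulrCA mulrA.
Qed.


Lemma tsq k : (0 < k)%N -> (t k * Num.sqrt (k%:R : R)) ^+ 2 = (k%:R : R) `^ (2 - 2 * a).
Proof.
move=> hk.
have -> : 2 - 2 * a = (2^-1 - a + 2^-1) * 2%:R by rewrite -[2%:R]/2; field.
rewrite powRrM powR_mulrn ?powR_ge0 // powRD; last by rewrite pnatr_eq0 -lt0n hk implybT.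
by rewrite /t powR12_sqrt ?ler0n.
Qed.

Lemma helper (P x y B : R) : 0 < x -> P * y ^+ 2 <= B * x ^+ 2 -> P * (y / x) ^+ 2 <= B.
Proof.
move=> hx h; rewrite expr_div_n mulrA ler_pdivrMr //; exact: exprn_gt0.
Qed.

End Aux.
Arguments Ssum {R}.
Arguments t {R}.

Theorem proposition2 (R : realType) (alpha : R) (halpha : 0 <= alpha) :
  exists c C : R, 0 < c /\ 0 < C /\
    forall (k n : nat) (v : 'rV[R]_n),
      (1 <= k)%N ->
      unit_vec v ->
      nnz v = k ->
      (forall i : nat, (1 <= i <= k)%N -> vord v i ^+ 2 = lam alpha k * i%:R `^ (- alpha)) ->
      c * rate alpha k <= max_ps2 v k /\ max_ps2 v k <= C * rate alpha k.
Proof.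
exists 1, 9; split; first exact: ltr01.
split; first by [].
move=> k n v hk _ _ hv.
have hs : forall p, (1 <= p <= k)%N -> Defs.sfun v p = Ssum alpha k / Ssum alpha p.
  move=> p /andP [h1 h2]; rewrite /Defs.sfun.
  have -> : \sum_(1 <= i < p.+1) vord v i ^+ 2 = \sum_(1 <= i < p.+1) lam alpha k * i%:R `^ (- alpha).
    apply: eq_big_nat => i /andP [i1 i2]; apply: hv.
    by rewrite i1 /=; apply: leq_trans h2.
  rewrite -mulr_sumr.
  change (lam alpha k) with (Ssum alpha k)^-1.
  by rewrite invfM invrK mulrC.

have hSp : forall p, (0 < p)%N -> 0 < Ssum alpha p by move=> p hp; apply: S_gt0.
have hle : forall p, (1 <= p <= k)%N -> p%:R * Defs.sfun v p ^+ 2 <= max_ps2 v k.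
  move=> p hp; rewrite /max_ps2.
  apply: (le_bigmax_seq _ _ (fun=> true) (fun p : nat => p%:R * Defs.sfun v p ^+ 2)) => //.
  by rewrite mem_index_iota ltnS.
have hge : forall B : R, 0 <= B -> (forall p, (1 <= p <= k)%N -> p%:R * Defs.sfun v p ^+ 2 <= B) ->
    max_ps2 v k <= B.
  move=> B hB hB'; rewrite /max_ps2 big_nat_cond; apply: bigmax_le => //.
  by move=> p /andP [/andP [h1 h2] _]; apply: hB'; rewrite h1 -ltnS.
have hk' : (1 <= k <= k)%N by rewrite hk leqnn.
have sqk : 0 <= Num.sqrt (k%:R : R) by apply: sqrtr_ge0.
have hSk := hSp k hk.
rewrite /rate; case: ltP => ha2.
- have ha2' : alpha <= 2^-1 by apply: ltW.
  have hK := @tsq _ alpha k hk.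
  set K := (k%:R : R) `^ (2 - 2 * alpha) in hK *.
  have tk := @t_gt0 _ alpha k hk.
  split.
  + rewrite mul1r; apply: le_trans (hle 1%N _); last by rewrite leqnn hk.
    rewrite hs; last by rewrite leqnn hk.
    rewrite /Ssum big_nat1 powR1 divr1 mul1r -/(Ssum alpha k) -hK.
    have := @S_low _ alpha halpha k hk.
    have : 0 <= Num.sqrt (k%:R : R) * t alpha k by rewrite mulr_ge0 // ltW.
    move=> h0 h1; rewrite mulrC; nra.
  + apply: hge; first by rewrite mulr_ge0 // /K powR_ge0.
    move=> p /andP [h1 h2]; rewrite hs; last by rewrite h1 h2.
    apply: helper; first exact: hSp.
    set x := Ssum alpha p; set y := Ssum alpha k.
    have hxl := @S_low _ alpha halpha p h1; rewrite -/x in hxl.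
    have tp1 := @t_ge1 _ alpha ha2' p h1.
    have q0 : 0 <= Num.sqrt (p%:R : R) by apply: sqrtr_ge0.
    have hq2 : Num.sqrt (p%:R : R) ^+ 2 = p%:R by rewrite sqr_sqrtr ?ler0n.
    have hx1 : Num.sqrt (p%:R : R) <= x.
      apply: le_trans hxl; rewrite -{1}[Num.sqrt _]mulr1; exact: ler_wpM2l.
    have hx2 : p%:R <= x ^+ 2.
      rewrite -hq2; apply: ler_pM => //.
    have hyu := @S_up_small _ alpha ha2' k; rewrite -/y in hyu.
    have hy0 : 0 <= y by apply: ltW.
    have hy2 : y ^+ 2 <= 4 * K.
      rewrite -hK; have : y <= 2 * (t alpha k * Num.sqrt (k%:R : R)) by rewrite mulrA.
      have : 0 <= t alpha k * Num.sqrt (k%:R : R) by rewrite mulr_ge0 // ltW.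
      move=> h0 h; rewrite !expr2; nra.
    have K0 : 0 <= K by apply: powR_ge0.
    have e1 : 0 <= (x ^+ 2 - p%:R) * y ^+ 2 by rewrite mulr_ge0 ?subr_ge0 ?sqr_ge0.
    have e2 : 0 <= (4 * K - y ^+ 2) * x ^+ 2 by rewrite mulr_ge0 ?subr_ge0 ?sqr_ge0.
    have e3 : 0 <= K * x ^+ 2 by rewrite mulr_ge0 ?sqr_ge0.
    nra.
- split.
  + rewrite mul1r; apply: le_trans (hle k hk').
    rewrite hs // divff ?expr1n ?mulr1 //; exact: lt0r_neq0.
  + apply: hge; first by rewrite mulr_ge0 // ler0n.
    move=> p /andP [h1 h2]; rewrite hs; last by rewrite h1 h2.
    apply: helper; first exact: hSp.
    set x := Ssum alpha p; set y := Ssum alpha k.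
    have hxl := @S_low _ alpha halpha p h1; rewrite -/x in hxl.
    have hyu := @S_up_large _ alpha ha2 p k h1 h2; rewrite -/x -/y in hyu.
    set q := Num.sqrt (p%:R : R) in hxl.
    set Kq := Num.sqrt (k%:R : R) in hyu sqk.
    set T := t alpha p in hxl hyu.
    have q0 : 0 < q by rewrite sqrtr_gt0 ltr0n.
    have T0 : 0 < T by apply: t_gt0.
    have hqK : q <= Kq by rewrite ler_sqrt ?ler0n // ler_nat.
    have hp2 : (p%:R : R) = q ^+ 2 by rewrite sqr_sqrtr ?ler0n.
    have hk2 : (k%:R : R) = Kq ^+ 2 by rewrite sqr_sqrtr ?ler0n.
    have hy0 : 0 <= y by apply: ltW.
    have hx0 : 0 < x by apply: hSp.
    have a1 : y * q <= x * q + 2 * T * Kq * q.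
      by rewrite -mulrDl ler_wpM2r // ltW.
    have a2 : T * q <= x by rewrite mulrC.
    have a3 : 2 * T * Kq * q <= 2 * x * Kq.
      rewrite -!mulrA (mulrC Kq) !mulrA -(mulrA 2 T q) ler_wpM2r // ler_wpM2l //.
    have a4 : x * q <= x * Kq by rewrite ler_wpM2l // ltW.
    have a5 : y * q <= 3 * x * Kq by lra.
    have a6 : 0 <= y * q by rewrite mulr_ge0 // ltW.
    have a7 : (y * q) ^+ 2 <= (3 * x * Kq) ^+ 2.
      by rewrite !expr2; apply: ler_pM.
    rewrite hp2 hk2; rewrite !exprMn in a7.
    have -> : q ^+ 2 * y ^+ 2 = y ^+ 2 * q ^+ 2 by rewrite mulrC.
    apply: le_trans a7 _; rewrite (_ : (3 : R) ^+ 2 = 9); last by rewrite expr2; lra.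
    by rewrite -mulrA mulrC -mulrA mulrC (mulrC (Kq ^+ 2)) mulrA.
Qed.
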